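(* Let $(M,f,g)$ be an $(m,n)$-hypermodule over a commutative Krasner $(m,n)$-hyperring $(R,f',g')$ with scalar identity $1$, let $Q$ be a proper subhypermodule of $M$ and put $S=M\setminus Q$. Then $Q$ is an $n$-ary classical prime subhypermodule of $M$ if and only if the following holds: for all hyperideals $I_1,\dots,I_{n-1}$ of $R$ and all subhypermodules $N_1,N_2$ of $M$, if $f(N_1,g(I_i,1^{(n-2)},N_2),0^{(m-2)})\cap S\neq\varnothing$ for every $1\le i\le n-1$, then $f(N_1,g(I_1^{n-1},N_2),0^{(m-2)})\cap S\neq\varnothing$.
   Context: A commutative Krasner $(m,n)$-hyperring with scalar identity $1$ is a triple $(R,f',g')$ where $(R,f')$ is a canonical $m$-ary hypergroup with zero $0$, $(R,g')$ is a commutative $n$-ary semigroup, $g'$ is distributive over $f'$, $0$ is a zero element for $g'$, and $g'(x,1^{(n-1)})=x$ for all $x$. Notation: $x_i^j$ denotes the sequence $x_i,\dots,x_j$ and $x^{(k)}$ denotes $x$ repeated $k$ times. A hyperideal $I$ of $R$ is a nonempty subset such that $(I,f')$ is an $m$-ary subhypergroup and $g'(x_1^{i-1},I,x_{i+1}^n)\subseteq I$ for all $x$'s and $i$. An $(m,n)$-hypermodule over $R$ is a triple $(M,f,g)$ where $(M,f)$ is a canonical $m$-ary hypergroup with zero $0$ and $g:R^{n-1}\times M\to P^*(M)$ satisfies: $g(r_1^{n-1},f(x_1^m))=f(g(r_1^{n-1},x_1),\dots,g(r_1^{n-1},x_m))$; $g(r_1^{i-1},f'(s_1^m),r_{i+1}^{n-1},x)=f(g(r_1^{i-1},s_1,r_{i+1}^{n-1},x),\dots,g(r_1^{i-1},s_m,r_{i+1}^{n-1},x))$;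 $g(r_1^{i-1},g'(r_i^{i+n-1}),r_{i+n}^{2n-2},x)=g(r_1^{n-1},g(r_n^{2n-2},x))$; and $g(r_1^{i-1},0,r_{i+1}^{n-1},x)=\{0\}$. Also $g(1^{(n-1)},a)=\{a\}$ and $g(r_1^{n-1},0)=\{0\}$. For subsets, $g(A_1,\dots,A_{n-1},X)=\bigcup\{g(r_1^{n-1},x): r_i\in A_i, x\in X\}$ and similarly $f$ applied to subsets is the union over elements. A subhypermodule of $M$ is a nonempty $N\subseteq M$ with $(N,f)$ an $m$-ary subhypergroup and $g(R^{(n-1)},N)\subseteq N$. A proper subhypermodule $Q$ of $M$ is $n$-ary classical prime if for all $r_1^{n-1}\in R$ and $a\in M$, $g(r_1^{n-1},a)\subseteq Q$ implies $g(r_i,1^{(n-2)},a)\subseteq Q$ for some $1\le i\le n-1$. *)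

(* Defs.v *)
From Stdlib Require Import Permutation.
From mathcomp Require Import all_boot.
Set Implicit Arguments. Unset Strict Implicit. Unset Printing Implicit Defensive.

(* A hyperoperation of arity k on T: applied to a list of (exactly k) arguments,
   it returns a subset of T (represented as a predicate). *)
Definition hop (T : Type) := seq T -> T -> Prop.

Definition sing {T : Type} (x : T) : T -> Prop := fun y => y = x.
Definition seteq {T : Type} (A B : T -> Prop) := forall z, A z <-> B z.
Definition subset {T : Type} (A B : T -> Prop) := forall z, A z -> B z.

Fixpoint all_in {T : Type} (As : seq (T -> Prop)) (xs : seq T) : Prop :=
  match As, xs with
  | [::], [::] => True
  | A :: As', x :: xs' => A x /\ all_in As' xs'
  | _, _ => False
  end.

Definition hlift {T : Type} (f : hop T) (As : seq (T -> Prop)) : T -> Prop :=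
  fun z => exists xs, all_in As xs /\ f xs z.

Definition is_inv {H : Type} (m : nat) (f : hop H) (e x y : H) : Prop :=
  f (x :: y :: nseq (m - 2) e) e.

(* Canonical (commutative) m-ary hypergroup with zero e.  Indices are 0-based. *)
Record canonical_hypergroup (m : nat) (H : Type) (f : hop H) (e : H) : Prop := {
  chg_nonempty : forall xs, size xs = m -> exists z, f xs z;
  chg_assoc : forall (xs : seq H) i j, size xs = (2 * m - 1)%N -> i < m -> j < m ->
     seteq (hlift f (map sing (take i xs) ++ f (take m (drop i xs)) :: map sing (drop (i + m) xs)))
           (hlift f (map sing (take j xs) ++ f (take m (drop j xs)) :: map sing (drop (j + m) xs)));
  chg_repr : forall (xs : seq H) i, size xs = m -> i < m ->
     seteq (hlift f (map sing (take i xs) ++ (fun _ => True) :: map sing (drop i.+1 xs)))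
           (fun _ => True);
  chg_comm : forall xs ys, size xs = m -> Permutation xs ys -> seteq (f xs) (f ys);
  chg_zero : forall x, seteq (f (x :: nseq (m - 1) e)) (sing x);
  chg_zero_uniq : forall e', (forall x, seteq (f (x :: nseq (m - 1) e')) (sing x)) -> e' = e;
  chg_inv : forall x, exists! y, is_inv m f e x y;
  (* x_0 \in f(x_1^m) implies x_i \in f(-x_{i-1},...,-x_1,x_0,-x_{i+1},...,-x_m) *)
  chg_rev : forall (xs ys : seq H) x0 i, size xs = m -> size ys = m -> i < m ->
     (forall k, k < m -> is_inv m f e (nth e xs k) (nth e ys k)) -> f xs x0 ->
     f (rev (take i ys) ++ x0 :: drop i.+1 ys) (nth e xs i) }.

Record krasner_hyperring (m n : nat) (R : Type) (f' : hop R) (g' : seq R -> R)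
    (z o : R) : Prop := {
  kh_add : canonical_hypergroup m f' z;
  kh_assoc : forall (xs : seq R) i j, size xs = (2 * n - 1)%N -> i < n -> j < n ->
     g' (take i xs ++ g' (take n (drop i xs)) :: drop (i + n) xs)
     = g' (take j xs ++ g' (take n (drop j xs)) :: drop (j + n) xs);
  kh_comm : forall xs ys, size xs = n -> Permutation xs ys -> g' xs = g' ys;
  kh_distr : forall (pre post ys : seq R), size (pre ++ post) = (n - 1)%N -> size ys = m ->
     seteq (fun w => exists y, f' ys y /\ w = g' (pre ++ y :: post))
           (f' (map (fun y => g' (pre ++ y :: post)) ys));
  kh_zero : forall (pre post : seq R), size (pre ++ post) = (n - 1)%N ->
     g' (pre ++ z :: post) = z;
  kh_one : forall x, g' (x :: nseq (n - 1) o) = x }.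

Record hypermodule (m n : nat) (R : Type) (f' : hop R) (g' : seq R -> R) (zR oR : R)
    (M : Type) (f : hop M) (g : seq R -> M -> M -> Prop) (zM : M) : Prop := {
  hm_add : canonical_hypergroup m f zM;
  hm_nonempty : forall rs x, size rs = (n - 1)%N -> exists y, g rs x y;
  hm_distr1 : forall rs xs, size rs = (n - 1)%N -> size xs = m ->
     seteq (fun w => exists y, f xs y /\ g rs y w) (hlift f (map (g rs) xs));
  hm_distr2 : forall (pre post ss : seq R) x, size (pre ++ post) = (n - 2)%N -> size ss = m ->
     seteq (fun w => exists s, f' ss s /\ g (pre ++ s :: post) x w)
           (hlift f (map (fun s => g (pre ++ s :: post) x) ss));
  hm_assoc : forall (rs : seq R) i x, size rs = (2 * n - 2)%N -> i < n - 1 ->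
     seteq (g (take i rs ++ g' (take n (drop i rs)) :: drop (i + n) rs) x)
           (fun w => exists y, g (drop (n - 1) rs) x y /\ g (take (n - 1) rs) y w);
  hm_zero_scalar : forall (pre post : seq R) x, size (pre ++ post) = (n - 2)%N ->
     seteq (g (pre ++ zR :: post) x) (sing zM);
  hm_one : forall a, seteq (g (nseq (n - 1) oR) a) (sing a);
  hm_zero : forall rs, size rs = (n - 1)%N -> seteq (g rs zM) (sing zM) }.

Definition glift (R M : Type) (g : seq R -> M -> M -> Prop) (As : seq (R -> Prop))
    (X : M -> Prop) : M -> Prop :=
  fun w => exists rs x, all_in As rs /\ X x /\ g rs x w.

Definition subhypergroup (m : nat) (T : Type) (f : hop T) (N : T -> Prop) : Prop :=
  (exists x, N x) /\
  (forall xs, all_in (nseq m N) xs -> subset (f xs) N) /\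
  (forall xs i, all_in (nseq m N) xs -> i < m ->
     seteq (hlift f (map sing (take i xs) ++ N :: map sing (drop i.+1 xs))) N).

Definition hyperideal (m n : nat) (R : Type) (f' : hop R) (g' : seq R -> R)
    (I : R -> Prop) : Prop :=
  subhypergroup m f' I /\
  (forall (pre post : seq R) x, size (pre ++ post) = (n - 1)%N -> I x ->
     I (g' (pre ++ x :: post))).

Definition subhypermodule (m n : nat) (R M : Type) (f : hop M)
    (g : seq R -> M -> M -> Prop) (N : M -> Prop) : Prop :=
  subhypergroup m f N /\
  (forall rs x w, size rs = (n - 1)%N -> N x -> g rs x w -> N w).

Definition hproper {M : Type} (Q : M -> Prop) : Prop := exists x, ~ Q x.

Definition classical_prime (m n : nat) (R M : Type) (f : hop M)
    (g : seq R -> M -> M -> Prop) (oR : R) (Q : M -> Prop) : Prop :=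
  subhypermodule m n f g Q /\ hproper Q /\
  (forall rs a, size rs = (n - 1)%N -> subset (g rs a) Q ->
     exists i, i < n - 1 /\ subset (g (nth oR rs i :: nseq (n - 2) oR) a) Q).

(* Main.v *)
Require Import Defs.
From Stdlib Require Import Permutation Classical.
From mathcomp Require Import all_boot zify.
Set Implicit Arguments. Unset Strict Implicit. Unset Printing Implicit Defensive.

Section AllIn.
Variable T : Type.

Lemma all_in_size (As : seq (T -> Prop)) xs : all_in As xs -> size xs = size As.
Proof. by elim: As xs => [|A As IH] [|x xs] //= [_ /IH ->]. Qed.

Lemma all_in_cat (A1 A2 : seq (T -> Prop)) x1 x2 :
  all_in A1 x1 -> all_in A2 x2 -> all_in (A1 ++ A2) (x1 ++ x2).
Proof. by elim: A1 x1 => [|A As IH] [|x xs] //= [? /IH]; auto. Qed.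

Lemma all_in_catE (A1 A2 : seq (T -> Prop)) xs :
  all_in (A1 ++ A2) xs -> exists x1 x2, xs = x1 ++ x2 /\ all_in A1 x1 /\ all_in A2 x2.
Proof.
elim: A1 xs => [|A As IH] xs /=; first by exists [::], xs.
case: xs => [|x xs] // [Ax /IH [x1 [x2 [-> [h1 h2]]]]].
by exists (x :: x1), x2.
Qed.

Lemma all_in_sing (l : seq T) : all_in (map sing l) l.
Proof. by elim: l => //= x l ->. Qed.

Lemma all_in_singE (l : seq T) xs : all_in (map sing l) xs -> xs = l.
Proof. by elim: l xs => [|y l IH] [|x xs] //= [-> /IH ->]. Qed.

Lemma all_in_nseq_c (A : T -> Prop) j xs c : all_in (nseq j A) xs -> (forall x, A x -> x = c) ->
  xs = nseq j c.
Proof. by move=> + hA; elim: j xs => [|j IH] [|x xs] //= [/hA -> /IH ->]. Qed.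

Lemma all_in_nseq_sing j (c : T) : all_in (nseq j (sing c)) (nseq j c).
Proof. by elim: j => //= j ->. Qed.

Lemma all_in_nseqE (A : T -> Prop) j xs : all_in (nseq j A) xs -> size xs = j /\ List.Forall A xs.
Proof.
elim: j xs => [|j IH] [|x xs] //= [Ax /IH [-> h]]; split; auto.
Qed.

Lemma all_in_nseqI (A : T -> Prop) xs : List.Forall A xs -> all_in (nseq (size xs) A) xs.
Proof. by elim=> //= x l ? ? ->; split. Qed.

Lemma Forall_cat (A : T -> Prop) l1 l2 : List.Forall A l1 -> List.Forall A l2 -> List.Forall A (l1 ++ l2).
Proof. elim=> //= x l ? ? IH ?; constructor; auto. Qed.

Lemma Forall_take (A : T -> Prop) i l : List.Forall A l -> List.Forall A (take i l).
Proof. elim: l i => [|x l IH] [|i] //= h; inversion h; subst; constructor; auto. Qed.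

Lemma Forall_drop (A : T -> Prop) i l : List.Forall A l -> List.Forall A (drop i l).
Proof. elim: l i => [|x l IH] [|i] //= h; inversion h; subst; auto. Qed.

Lemma Forall_nth (A : T -> Prop) l d i : List.Forall A l -> i < size l -> A (nth d l i).
Proof. elim: l i => [|x l IH] [|i] //= h; inversion h; subst; auto. Qed.

Lemma Forall_nthI (A : T -> Prop) l d : (forall i, i < size l -> A (nth d l i)) -> List.Forall A l.
Proof.
elim: l => [|x l IH] h; constructor; first exact: (h 0).
by apply: IH => i hi; apply: (h i.+1).
Qed.

Lemma Forall_nseq (A : T -> Prop) j c : A c -> List.Forall A (nseq j c).
Proof. by move=> h; elim: j => //= j IH; constructor. Qed.

Lemma all_in_nth_c (As : seq (T -> Prop)) d c : (forall i, i < size As -> nth d As i c) ->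
  all_in As (nseq (size As) c).
Proof.
elim: As => [|A As IH] //= h; split; first exact: (h 0).
by apply: IH => i hi; apply: (h i.+1).
Qed.

Lemma all_in_nth (As : seq (T -> Prop)) xs d x0 i : all_in As xs -> i < size As -> nth d As i (nth x0 xs i).
Proof. elim: As xs i => [|A As IH] [|x xs] [|i] //= [h1 h2] hi; auto. Qed.

Lemma all_in_map_Q (U : Type) (F : U -> T -> Prop) (P : U -> Prop) (Q : T -> Prop) xs ys :
  List.Forall P xs -> (forall x y, P x -> F x y -> Q y) -> all_in (map F xs) ys ->
  List.Forall Q ys.
Proof.
move=> + hF; elim: xs ys => [|x xs IH] [|y ys] //= hP [h1 h2]; inversion hP; subst.
constructor; [exact: hF h1 | exact: IH].
Qed.

Lemma all_in_map_ex (U : Type) (F : U -> T) xs :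
  List.Forall (fun x => exists u, x = F u) xs -> exists us, xs = map F us.
Proof.
elim=> [|x l [u ->] _ [us ->]]; first by exists [::].
by exists (u :: us).
Qed.

End AllIn.

Lemma perm_rev_ssr (T : Type) (s : seq T) : Permutation (rev s) s.
Proof.
elim: s => //= x s IH; rewrite rev_cons -cats1.
apply: Permutation_trans (Permutation_app_tail _ IH) _.
by apply: Permutation_sym; apply: Permutation_cons_append.
Qed.

Lemma size_mid (T : Type) (xs : seq T) i w : i < size xs ->
  size (take i xs ++ w :: drop i.+1 xs) = size xs.
Proof.
move=> hi; have := set_nthE xs w i w; rewrite hi => <-.
by rewrite size_set_nth; apply/maxn_idPr.
Qed.

Section HG.
Variables (H : Type) (p : nat) (f : hop H) (e : H).
Hypothesis HG : canonical_hypergroup p.+2 f e.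

Lemma fperm xs ys z : Permutation xs ys -> size xs = p.+2 -> f xs z -> f ys z.
Proof. by move=> hp hs h; apply/(chg_comm HG hs hp). Qed.

Lemma zero_r x : f (x :: nseq p.+1 e) x.
Proof. exact/((chg_zero HG x x).2 erefl). Qed.

Lemma zero_r_uniq x y : f (x :: nseq p.+1 e) y -> y = x.
Proof. exact: (chg_zero HG x y).1. Qed.

Lemma zero_l x : f (e :: x :: nseq p e) x.
Proof.
apply: (@fperm (x :: e :: nseq p e)); first exact: perm_swap.
  by rewrite /= size_nseq.
exact: zero_r.
Qed.

Lemma zero_l_uniq x y : f (e :: x :: nseq p e) y -> y = x.
Proof.
move=> h; apply: zero_r_uniq; apply: (@fperm (e :: x :: nseq p e)) h.
  exact: perm_swap.
by rewrite /= size_nseq ?subSS ?subn0.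
Qed.

Lemma is_invE x y : is_inv p.+2 f e x y <-> f (x :: y :: nseq p e) e.
Proof. by rewrite /is_inv !subSS subn0. Qed.

Lemma inv_sym x y : is_inv p.+2 f e x y -> is_inv p.+2 f e y x.
Proof.
rewrite /is_inv => h; apply: (@fperm (x :: y :: nseq (p.+2 - 2) e)) h.
  exact: perm_swap.
by rewrite /= size_nseq ?subSS ?subn0.
Qed.

Lemma inv_e : is_inv p.+2 f e e e.
Proof. apply/is_invE; exact: zero_r. Qed.

Lemma inv_uniq x y y' : is_inv p.+2 f e x y -> is_inv p.+2 f e x y' -> y = y'.
Proof.
case: (chg_inv HG x) => y0 [_ hu] h1 h2.
by rewrite -(hu _ h1) -(hu _ h2).
Qed.

Lemma inv_ex x : exists y, is_inv p.+2 f e x y.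
Proof. by case: (chg_inv HG x) => y [h _]; exists y. Qed.

Lemma rev_sub a b c v : f (a :: b :: nseq p e) c -> is_inv p.+2 f e b v -> f (c :: v :: nseq p e) a.
Proof.
move=> hc hv; case: (inv_ex a) => a' ha; move/is_invE in hv.
have := chg_rev HG (xs := a :: b :: nseq p e) (ys := a' :: v :: nseq p e) (x0 := c) (i := 0).
apply => //; try by rewrite /= size_nseq.
move=> [|[|j]] hj; first exact: ha; first by apply/is_invE.
by rewrite /= nth_nseq; case: ifP => _; exact: inv_e.
Qed.

Lemma invs_ex xs : exists ws, size ws = size xs /\
  forall i, i < size xs -> is_inv p.+2 f e (nth e xs i) (nth e ws i).
Proof.
elim: xs => [|x xs [ws [hs hw]]]; first by exists [::].
case: (inv_ex x) => y hy; exists (y :: ws); split; first by rewrite /= hs.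
by case=> [|i] //= hi; apply: hw.
Qed.

Lemma subhg_crit (N : H -> Prop) x0 : N x0 ->
  (forall xs, all_in (nseq p.+2 N) xs -> Defs.subset (f xs) N) ->
  (forall x y, N x -> is_inv p.+2 f e x y -> N y) -> subhypergroup p.+2 f N.
Proof.
move=> hx0 hcl hinv; split; first by exists x0.
split => // xs i hxs hi z; split.
  case=> ws [hws hf]; apply: (hcl ws) hf.
  have [s1 [s2 [-> [h1 h2]]]] := all_in_catE hws.
  rewrite (all_in_singE h1); case: s2 h2 => [|w s2] // [hw /all_in_singE ->].
  have [hsz hF] := all_in_nseqE hxs.
  have hi' : i < size xs by rewrite hsz.
  rewrite -{1}hsz -(size_mid w hi').
  apply: all_in_nseqI; apply: Forall_cat; first exact: Forall_take.
  by constructor => //; apply: Forall_drop.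
move=> hz.
have [hsz hF] := all_in_nseqE hxs.
have [ws [hws hw]] := invs_ex xs.
set zs := set_nth e ws i z.
have hzs : size zs = p.+2 by rewrite size_set_nth hws hsz; apply/maxn_idPr.
have [x hx] := chg_nonempty HG hzs.
have hNx : N x.
  apply: (hcl zs) hx; rewrite -hzs; apply: all_in_nseqI; apply: (@Forall_nthI _ _ _ e) => j hj.
  rewrite /zs nth_set_nth /=; case: ifP => // _.
  have hj' : j < size xs by rewrite hsz -hzs.
  apply: (hinv (nth e xs j)); first exact: Forall_nth.
  exact: hw.
have [z' hz'] := inv_ex z.
set vs := set_nth e xs i z'.
have hvs : size vs = p.+2 by rewrite size_set_nth hsz; apply/maxn_idPr.
have hinvs : forall j, j < p.+2 -> is_inv p.+2 f e (nth e zs j) (nth e vs j).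
  move=> j hj; rewrite /zs /vs !nth_set_nth /=; case: ifP => _ //.
  apply: inv_sym; apply: hw; rewrite hsz //.
have := chg_rev HG hzs hvs hi hinvs hx.
have -> : nth e zs i = z by rewrite /zs nth_set_nth /= eqxx.
move=> h.
have hi' : i < size xs by rewrite hsz.
have Evs : vs = take i xs ++ z' :: drop i.+1 xs by rewrite /vs set_nthE hi'.
have E1 : take i vs = take i xs by rewrite Evs take_size_cat // size_take hi'.
have E2 : drop i.+1 vs = drop i.+1 xs.
  by rewrite Evs -cat_rcons drop_size_cat // size_rcons size_take hi'.
rewrite E1 E2 in h.
exists (take i xs ++ x :: drop i.+1 xs); split.
  apply: all_in_cat; first exact: all_in_sing.
  by split => //; apply: all_in_sing.
apply: fperm h.
  by apply: Permutation_app_tail; apply: perm_rev_ssr.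
by rewrite size_cat size_rev -size_cat size_mid // hsz.
Qed.

End HG.

Lemma split3 (T : Type) (A B C : seq T) :
  [/\ take (size A) (A ++ B ++ C) = A, drop (size A) (A ++ B ++ C) = B ++ C,
      take (size B) (B ++ C) = B & drop (size B) (B ++ C) = C].
Proof. by rewrite !take_size_cat // !drop_size_cat. Qed.

Lemma rcons_nseq (T : Type) j (c : T) : rcons (nseq j c) c = nseq j.+1 c.
Proof. by elim: j => //= j ->. Qed.

Lemma perm_xy (T : Type) (x y : T) mid Z : Permutation (x :: mid ++ y :: Z) (y :: mid ++ x :: Z).
Proof.
apply: (@Permutation_trans _ _ (y :: x :: mid ++ Z)).
  exact: (Permutation_sym (Permutation_middle (x :: mid) Z y)).
apply: (@Permutation_trans _ _ (x :: y :: mid ++ Z)); first exact: perm_swap.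
apply: (@Permutation_trans _ _ (y :: x :: mid ++ Z)); first exact: perm_swap.
apply: Permutation_cons => //; exact: Permutation_middle.
Qed.

Section HM.
Variables (p k : nat) (R : Type) (f' : hop R) (g' : seq R -> R) (zR oR : R).
Variables (M : Type) (f : hop M) (g : seq R -> M -> M -> Prop) (zM : M).
Hypothesis HR : krasner_hyperring p.+2 k.+2 f' g' zR oR.
Hypothesis HM : hypermodule p.+2 k.+2 f' g' zR oR f g zM.
Local Notation ones := (nseq k oR).
Local Notation HGR := (kh_add HR).
Local Notation HGM := (hm_add HM).

Lemma gone x : g' (x :: nseq k.+1 oR) = x.
Proof. by have := kh_one HR x; rewrite subSS subn0. Qed.

Lemma gcomm xs ys : size xs = k.+2 -> Permutation xs ys -> g' xs = g' ys.
Proof. exact: (kh_comm HR). Qed.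

Lemma gzero pre post : size (pre ++ post) = k.+1 -> g' (pre ++ zR :: post) = zR.
Proof. by move=> h; apply: (kh_zero HR); rewrite h subSS subn0. Qed.

Lemma gassocE3 A B C A' B' C' : A ++ B ++ C = A' ++ B' ++ C' ->
  size B = k.+2 -> size B' = k.+2 -> size A + size C = k.+1 -> size A' + size C' = k.+1 ->
  g' (A ++ g' B :: C) = g' (A' ++ g' B' :: C').
Proof.
move=> E hB hB' hAC hAC'.
have hs : size (A ++ B ++ C) = (2 * k.+2 - 1)%N.
  rewrite !size_cat hB; move: hAC; lia.
have hi : size A < k.+2 by move: hAC; lia.
have hj : size A' < k.+2 by move: hAC'; lia.
have F : forall A B C : seq R, size B = k.+2 ->
    take (size A) (A++B++C) ++ g' (take k.+2 (drop (size A) (A++B++C))) :: drop (size A + k.+2) (A++B++C)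
    = A ++ g' B :: C.
  move=> X Y Z hY; rewrite addnC -drop_drop.
  by case: (split3 X Y Z) => -> -> eY eZ; rewrite -hY eY eZ.
have := kh_assoc HR hs hi hj.
by move=> h; rewrite (F A B C hB) E (F A' B' C' hB') in h.
Qed.

Lemma gdistr pre post ys : size (pre ++ post) = k.+1 -> size ys = p.+2 ->
  seteq (fun w => exists y, f' ys y /\ w = g' (pre ++ y :: post))
        (f' (map (fun y => g' (pre ++ y :: post)) ys)).
Proof. by move=> h1 h2; apply: (kh_distr HR) => //; rewrite h1 subSS subn0. Qed.

Lemma mone a w : g (nseq k.+1 oR) a w <-> w = a.
Proof. by have := hm_one HM a w; rewrite subSS subn0. Qed.

Lemma mzs pre post x w : size (pre ++ post) = k -> (g (pre ++ zR :: post) x w <-> w = zM).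
Proof. by move=> h; apply: (hm_zero_scalar HM); rewrite h !subSS subn0. Qed.

Lemma mzero rs w : size rs = k.+1 -> (g rs zM w <-> w = zM).
Proof. by move=> h; apply: (hm_zero HM); rewrite h subSS subn0. Qed.

Lemma mdistr1 rs xs : size rs = k.+1 -> size xs = p.+2 ->
  seteq (fun w => exists y, f xs y /\ g rs y w) (hlift f (map (g rs) xs)).
Proof. by move=> h1 h2; apply: (hm_distr1 HM) => //; rewrite h1 subSS subn0. Qed.

Lemma mdistr2 pre post ss x : size (pre ++ post) = k -> size ss = p.+2 ->
  seteq (fun w => exists s, f' ss s /\ g (pre ++ s :: post) x w)
        (hlift f (map (fun s => g (pre ++ s :: post) x) ss)).
Proof. by move=> h1 h2; apply: (hm_distr2 HM) => //; rewrite h1 !subSS subn0. Qed.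

Lemma compE3 A B C D E x w : A ++ B ++ C = D ++ E -> size D = k.+1 ->
  size A + size C = k -> size B = k.+2 ->
  (g (A ++ g' B :: C) x w <-> exists y, g E x y /\ g D y w).
Proof.
move=> EL hD hAC hB.
have hs : size (A ++ B ++ C) = (2 * k.+2 - 2)%N.
  rewrite !size_cat hB; move: hAC; lia.
have hi : size A < k.+2 - 1 by move: hAC; rewrite subSS subn0; lia.
have := hm_assoc HM x hs hi w.
rewrite addnC -drop_drop.
case: (split3 A B C) => -> -> eB eC.
rewrite subSS subn0 -hB eB eC EL -hD take_size_cat // drop_size_cat //.
Qed.

Lemma all_in_nseq_const (T : Type) (A : T -> Prop) j c : A c -> all_in (nseq j A) (nseq j c).
Proof. by move=> h; elim: j => //= j ->. Qed.

Lemma sub_zero N : subhypermodule p.+2 k.+2 f g N -> N zM.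
Proof.
case=> [[[x hx] _] hg]; apply: (hg (zR :: ones) x) => //.
  by rewrite /= size_nseq subSS subn0.
by apply/(mzs (pre := [::]) (post := ones)); rewrite ?size_nseq.
Qed.

Lemma sub_g N rs x w : subhypermodule p.+2 k.+2 f g N -> size rs = k.+1 -> N x -> g rs x w -> N w.
Proof. by case=> _ hg hs; apply: hg; rewrite hs subSS subn0. Qed.

Lemma sub_f N xs z : subhypermodule p.+2 k.+2 f g N -> all_in (nseq p.+2 N) xs -> f xs z -> N z.
Proof. by case=> [[_ [hf _]] _] /hf; apply. Qed.

Lemma sub_f2 N x y z : subhypermodule p.+2 k.+2 f g N -> N x -> N y ->
  f (x :: y :: nseq p zM) z -> N z.
Proof.
move=> hN hx hy; apply: (sub_f hN); split => //; split => //.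
apply: all_in_nseq_const; exact: sub_zero.
Qed.

Lemma neg_ex : exists u, forall b, exists v, g (u :: ones) b v /\ is_inv p.+2 f zM b v.
Proof.
have [u hu] := inv_ex HGR oR; exists u => b; move/(is_invE p f' zR _ _) in hu.
have hs1 : size ([::] ++ ones) = k by rewrite size_nseq.
have hs2 : size (oR :: u :: nseq p zR) = p.+2 by rewrite /= size_nseq.
have := (mdistr2 b hs1 hs2 zM).1.
case; first by exists zR; split => //; apply/(mzs b zM hs1).
move=> xs [hall hf].
case: xs hall hf => [|x1 xs] //; case: xs => [|x2 xs']; first by case.
move=> [h1 [h2 h3]] hf.
exists x2; split => //; apply/(is_invE p f zM _ _).
move/(mone b x1): h1 => E1.
change (all_in (map (fun s => g ([::] ++ s :: ones) b) (nseq p zR)) xs') in h3.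
rewrite map_nseq in h3.
have E3 := all_in_nseq_c h3 (fun w => (mzs b w hs1).1).
by rewrite -E1 -E3.
Qed.

Lemma comm1 r u b w : (exists y, g (u :: ones) b y /\ g (r :: ones) y w) ->
  exists y, g (r :: ones) b y /\ g (u :: ones) y w.
Proof.
have hsz : forall c d, size (c :: rcons ones d) = k.+2 by move=> c d; rewrite /= size_rcons size_nseq.
have E : forall c d, [::] ++ (c :: rcons ones d) ++ ones = (c :: ones) ++ (d :: ones).
  by move=> c d; rewrite /= cat_rcons.
have hs1 : forall c, size (c :: ones) = k.+1 by move=> c; rewrite /= size_nseq.
have h1 := compE3 b w (E r u) (hs1 r) (size_nseq _ _) (hsz r u).
have h2 := compE3 b w (E u r) (hs1 u) (size_nseq _ _) (hsz u r).
have G : g' (r :: rcons ones u) = g' (u :: rcons ones r).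
  by apply: gcomm; [exact: hsz | rewrite -!cats1; exact: perm_xy].
by move=> h; apply/h2; rewrite -G; apply/h1.
Qed.

Lemma sublem (Q : M -> Prop) r a b c : subhypermodule p.+2 k.+2 f g Q ->
  f (a :: b :: nseq p zM) c ->
  (forall w, g (r :: ones) c w -> Q w) -> (forall w, g (r :: ones) b w -> Q w) ->
  forall w, g (r :: ones) a w -> Q w.
Proof.
move=> HQ hc hQc hQb w hw.
have [u hneg] := neg_ex; have [v [hv hinv]] := hneg b.
have ha := rev_sub HGM hc hinv.
have hQv : forall w, g (r :: ones) v w -> Q w.
  move=> w' hw'; have [y [hy1 hy2]] := comm1 (ex_intro _ v (conj hv hw')).
  by apply: (sub_g HQ _ (hQb _ hy1) hy2); rewrite /= size_nseq.
have hrs : size (r :: ones) = k.+1 by rewrite /= size_nseq.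
have hxs : size (c :: v :: nseq p zM) = p.+2 by rewrite /= size_nseq.
have [ys [hall hf]] := (mdistr1 hrs hxs w).1 (ex_intro _ a (conj ha hw)).
apply: (sub_f HQ _ hf).
have hF : List.Forall (fun x => forall w, g (r :: ones) x w -> Q w) (c :: v :: nseq p zM).
  constructor => //; constructor => //; apply: Forall_nseq => w' /(mzero _ hrs) ->.
  exact: sub_zero.
have := all_in_map_Q hF (fun x y h => h y) hall.
move/all_in_nseqI; rewrite (all_in_size hall) size_map /= size_nseq; apply.
Qed.

Lemma collapse pre post x y b w : 0 < k -> size pre + size post = k.-1 ->
  (g (pre ++ x :: y :: post) b w <-> g (pre ++ g' (x :: y :: ones) :: oR :: post) b w).
Proof.
move=> hk hs.
set L := pre ++ x :: y :: ones ++ oR :: post.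
have hL : k.+1 <= size L by rewrite /L size_cat /= size_cat size_nseq /=; lia.
have hD : size (take k.+1 L) = k.+1 by rewrite size_takel.
have E1 : pre ++ (x :: y :: ones) ++ oR :: post = take k.+1 L ++ drop k.+1 L by rewrite cat_take_drop.
have h1 := compE3 b w E1 hD (ltac:(rewrite /=; lia)) (ltac:(by rewrite /= size_nseq)).
have E2 : rcons pre x ++ (y :: rcons ones oR) ++ post = take k.+1 L ++ drop k.+1 L.
  by rewrite cat_take_drop /L cat_rcons /= cat_rcons.
have h2 := compE3 b w E2 hD (ltac:(rewrite size_rcons; lia)) (ltac:(by rewrite /= size_rcons size_nseq)).
rewrite rcons_nseq gone cat_rcons in h2.
by rewrite h2 h1.
Qed.

Lemma swapH x y mid post b w : size mid + size post = k.-1 -> 0 < k ->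
  (g (x :: mid ++ y :: post) b w <->
   g (g' (x :: mid ++ y :: nseq (k - size mid) oR) :: nseq (size mid).+1 oR ++ post) b w).
Proof.
move=> hs hk.
set L := (x :: mid) ++ (y :: nseq k.+1 oR) ++ post.
have hL : k.+1 <= size L by rewrite /L !size_cat /= size_nseq; lia.
have hD : size (take k.+1 L) = k.+1 by rewrite size_takel.
have E1 : (x :: mid) ++ (y :: nseq k.+1 oR) ++ post = take k.+1 L ++ drop k.+1 L by rewrite cat_take_drop.
have h1 := compE3 b w E1 hD (ltac:(rewrite /=; lia)) (ltac:(by rewrite /= size_nseq)).
rewrite gone in h1.
have E2 : [::] ++ (x :: mid ++ y :: nseq (k - size mid) oR) ++ nseq (size mid).+1 oR ++ post
    = take k.+1 L ++ drop k.+1 L.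
  have NE : nseq (k - size mid) oR ++ nseq (size mid).+1 oR = nseq k.+1 oR.
    by rewrite -nseqD; congr nseq; lia.
  rewrite cat_take_drop /L -NE.
  by rewrite /= -!catA /= -?catA.
have h2 := compE3 b w E2 hD (ltac:(rewrite /= size_cat size_nseq; lia))
  (ltac:(rewrite /= size_cat /= size_nseq; lia)).
by rewrite h2 -h1.
Qed.

Lemma swap x y mid post b w : 0 < k -> size mid + size post = k.-1 ->
  (g (x :: mid ++ y :: post) b w <-> g (y :: mid ++ x :: post) b w).
Proof.
move=> hk hs; rewrite (swapH _ _ _ _ hs hk) (swapH _ _ _ _ hs hk).
have -> // : g' (x :: mid ++ y :: nseq (k - size mid) oR) = g' (y :: mid ++ x :: nseq (k - size mid) oR).
apply: gcomm; last exact: perm_xy.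
rewrite /= size_cat /= size_nseq; lia.
Qed.

Lemma lemA r s rest b w : size rest = k ->
  (g (g' (r :: s :: ones) :: rest) b w <-> exists y, g (r :: rest) b y /\ g (s :: ones) y w).
Proof.
move=> hr.
have E : [::] ++ (s :: rcons ones r) ++ rest = (s :: ones) ++ (r :: rest) by rewrite /= cat_rcons.
have h := compE3 b w E (ltac:(by rewrite /= size_nseq)) (ltac:(by [])) (ltac:(by rewrite /= size_rcons size_nseq)).
rewrite -h /=.
have -> // : g' (r :: s :: ones) = g' (s :: rcons ones r).
apply: gcomm; first by rewrite /= size_nseq.
rewrite -cats1; exact: (Permutation_cons_append (s :: ones) r).
Qed.


Definition PI r := fun t => exists s, t = g' (r :: s :: ones).

Lemma PI_self r : PI r r.
Proof. by exists oR; rewrite gone. Qed.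

Lemma gzr r : g' (r :: zR :: ones) = zR.
Proof. by apply: (gzero (pre := [:: r]) (post := ones)); rewrite /= size_nseq. Qed.

Lemma nf r ys : size ys = k.+1 -> g' (r :: ys) = g' (r :: g' (rcons ys oR) :: ones).
Proof.
move=> hy.
have := gassocE3 (A := [::]) (B := r :: ys) (C := nseq k.+1 oR) (A' := [:: r]) (B' := rcons ys oR) (C' := ones).
rewrite /= gone; apply.
- by rewrite cat_rcons.
- by rewrite hy.
- by rewrite size_rcons hy.
- by rewrite size_nseq.
- by rewrite size_nseq.
Qed.

Lemma PI_mul r pre post t : size (pre ++ post) = k.+1 -> PI r t -> PI r (g' (pre ++ t :: post)).
Proof.
move=> hs [s ->].
set pp := pre ++ post.
have -> : g' (pre ++ g' (r :: s :: ones) :: post) = g' (g' (r :: s :: ones) :: pp).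
  apply: gcomm; first by move: hs; rewrite /pp !size_cat /=; lia.
  exact: Permutation_sym (Permutation_middle pre post _).
have hp1 : 1 <= size pp by rewrite hs.
have := gassocE3 (A := [::]) (B := r :: s :: ones) (C := pp) (A' := [:: r])
   (B' := s :: ones ++ take 1 pp) (C' := drop 1 pp).
rewrite /= => ->.
- rewrite nf; first by eexists.
  by rewrite /= size_drop hs subSS subn0.
- by rewrite -catA cat_take_drop.
- by rewrite size_nseq.
- by rewrite size_cat size_nseq (size_takel hp1) addn1.
- by rewrite hs.
- by rewrite size_drop hs subSS subn0 add1n.
Qed.

Lemma PI_f r xs z : all_in (nseq p.+2 (PI r)) xs -> f' xs z -> PI r z.
Proof.
move=> /all_in_nseqE [hs hF] hz.
have [ss Ess] := all_in_map_ex (F := fun s => g' (r :: s :: ones)) hF.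
have hss : size ss = p.+2 by rewrite -hs Ess size_map.
have hpp : size ([:: r] ++ ones) = k.+1 by rewrite /= size_nseq.
have [_ h] := gdistr hpp hss z.
rewrite Ess in hz; have [y [_ ->]] := h hz.
by exists y.
Qed.

Lemma PI_inv r t y : PI r t -> is_inv p.+2 f' zR t y -> PI r y.
Proof.
move=> [s ->] hy.
have [s' hs'] := inv_ex HGR s.
suff : is_inv p.+2 f' zR (g' (r :: s :: ones)) (g' (r :: s' :: ones)).
  by move=> h; rewrite (inv_uniq HGR hy h); exists s'.
apply/(is_invE p f' zR _ _).
have hpp : size ([:: r] ++ ones) = k.+1 by rewrite /= size_nseq.
have hss : size (s :: s' :: nseq p zR) = p.+2 by rewrite /= size_nseq.
have [h _] := gdistr hpp hss zR.
have := h (ex_intro _ zR (conj ((is_invE p f' zR _ _).1 hs') (esym (gzr r)))).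
by rewrite /= map_nseq /= gzr.
Qed.

Lemma PI_hyp r : hyperideal p.+2 k.+2 f' g' (PI r).
Proof.
split.
  apply: (subhg_crit HGR (PI_self r)).
    by move=> xs hxs z; apply: PI_f.
  by move=> x y; apply: PI_inv.
by move=> pre post x; rewrite subSS subn0; apply: PI_mul.
Qed.

Definition NQ (Q : M -> Prop) (Is : seq (R -> Prop)) :=
  fun x => forall ts w, all_in Is ts -> g ts x w -> Q w.

Lemma all_in_take (T : Type) (As : seq (T -> Prop)) xs j :
  all_in As xs -> all_in (take j As) (take j xs) /\ all_in (drop j As) (drop j xs).
Proof.
elim: As xs j => [|A As IH] [|x xs] [|j] //= [h1 h2]; try by split.
by have [? ?] := IH _ j h2; split.
Qed.

Lemma drop_last (T : Type) (s : seq T) d : size s = k.+1 -> drop k s = [:: nth d s k].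
Proof.
move=> hs; rewrite (drop_nth d); last by rewrite hs.
by rewrite drop_oversize // hs.
Qed.

Lemma NQ_g Q Is x ss w : size Is = k.+1 ->
  (forall t pre post, nth (fun _ => True) Is k t -> size (pre ++ post) = k.+1 ->
     nth (fun _ => True) Is k (g' (pre ++ t :: post))) ->
  NQ Q Is x -> size ss = k.+1 -> g ss x w -> NQ Q Is w.
Proof.
move=> hI hlast hx hss hw ts v hts hv.
have hts_s : size ts = k.+1 by rewrite (all_in_size hts).
have E : take k ts ++ (drop k ts ++ ss) ++ [::] = ts ++ ss by rewrite cats0 catA cat_take_drop.
have := compE3 x v E hts_s (ltac:(by rewrite size_takel ?hts_s // addn0))
   (ltac:(by rewrite size_cat size_drop hts_s hss subSnn)).
move=> [_ /(_ (ex_intro _ w (conj hw hv)))] hv'.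
apply: (hx _ v _ hv').
have [h1 h2] := all_in_take k hts.
rewrite -(cat_take_drop k Is); apply: all_in_cat => //.
rewrite (drop_last (fun _ => True) hI) (drop_last zR hts_s) in h2 *.
move: h2 => /= [ht _]; split => //.
exact: (hlast _ [::] ss ht).
Qed.

Lemma NQ_sub Q Is : subhypermodule p.+2 k.+2 f g Q -> size Is = k.+1 ->
  (forall t pre post, nth (fun _ => True) Is k t -> size (pre ++ post) = k.+1 ->
     nth (fun _ => True) Is k (g' (pre ++ t :: post))) ->
  subhypermodule p.+2 k.+2 f g (NQ Q Is).
Proof.
move=> HQ hI hlast; split.
  apply: (subhg_crit HGM (x0 := zM)).
  - move=> ts w /all_in_size; rewrite hI => hs /(mzero _ hs) ->; exact: sub_zero.
  - move=> xs /all_in_nseqE [hs hF] z hz ts w hts hw.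
    have hts_s : size ts = k.+1 by rewrite (all_in_size hts).
    have [ys [hall hf]] := (mdistr1 hts_s hs w).1 (ex_intro _ z (conj hz hw)).
    have hQ := all_in_map_Q hF (fun x y hx hy => hx ts y hts hy) hall.
    apply: (sub_f HQ _ hf).
    by have := all_in_nseqI hQ; rewrite (all_in_size hall) size_map hs.
  - move=> x y hx hxy.
    have [u hneg] := neg_ex; have [v [hv hinv]] := hneg x.
    rewrite (inv_uniq HGM hxy hinv).
    by apply: (NQ_g hI hlast hx _ hv); rewrite /= size_nseq.
by move=> rs x w; rewrite subSS subn0 => hs hx; apply: NQ_g.
Qed.

Lemma a_in_NQ Q rs a : subhypermodule p.+2 k.+2 f g Q -> size rs = k.+1 ->
  (forall w, g rs a w -> Q w) -> NQ Q (map PI rs) a.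
Proof.
move=> HQ hrs ha.
suff C : forall j, j <= k.+1 -> forall us w, all_in (map PI (take j rs)) us ->
    g (us ++ drop j rs) a w -> Q w.
  move=> ts w hts hw; apply: (C k.+1 (leqnn _) ts w).
    by rewrite take_oversize // hrs.
  by rewrite drop_oversize ?hrs // cats0.
move=> j; elim: j => [|j IH] hj us w.
  rewrite take0; case: us => [_|? ?] //; rewrite drop0 /=; exact: ha.
have hj' : j < size rs by rewrite hrs.
rewrite (take_nth oR hj') map_rcons -cats1 => /all_in_catE [us0 [x2 [-> [h1 h2]]]].
case: x2 h2 => [|t [|? ?]] //=; last by move=> [_ []].
move=> [[s ->] _].
have hus : size us0 = j by rewrite (all_in_size h1) size_map size_takel // ltnW.
have hdr : size (drop j.+1 rs) = k - j by rewrite size_drop hrs.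
have IH' := IH (ltnW hj) us0.
rewrite (drop_nth oR hj') in IH'.
case: us0 h1 hus IH' => [|x0 mid] h1 hus IH'.
  have hr : size (drop j.+1 rs) = k by rewrite hdr -hus subn0.
  move=> /= /(lemA _ _ _ _ hr) [y [hy1 hy2]].
  apply: (sub_g HQ _ (IH' y h1 hy1) hy2); by rewrite /= size_nseq.
have hk : 0 < k by move: hj hus => /=; lia.
have hsz : size mid + size (drop j.+1 rs) = k.-1 by move: hus hj; rewrite hdr /=; lia.
have hr : size (mid ++ x0 :: drop j.+1 rs) = k by rewrite size_cat /= hdr; move: hus hj => /=; lia.
rewrite -catA /= => /(swap _ _ _ _ hk hsz) /(lemA _ _ _ _ hr) [y [hy1 hy2]].
move/(swap _ _ _ _ hk hsz) in hy1.
apply: (sub_g HQ _ (IH' y h1 hy1) hy2); by rewrite /= size_nseq.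
Qed.


Definition Good (Q N : M -> Prop) (S : R -> Prop) :=
  forall t b w, S t -> N b -> g (t :: ones) b w -> Q w.

Definition CPp (Q : M -> Prop) := forall rs a, size rs = k.+1 -> Defs.subset (g rs a) Q ->
  exists i, i < k.+1 /\ Defs.subset (g (nth oR rs i :: ones) a) Q.

Lemma notGood Q N S : ~ Good Q N S -> exists t b w, S t /\ N b /\ g (t :: ones) b w /\ ~ Q w.
Proof.
move=> hn; apply: NNPP => hc; apply: hn => t b w ht hb hw; apply: NNPP => hq; apply: hc.
by exists t, b, w.
Qed.

Lemma cpcase Q x y c : subhypermodule p.+2 k.+2 f g Q -> CPp Q -> 0 < k ->
  (forall w, g (x :: y :: nseq k.-1 oR) c w -> Q w) ->
  (forall w, g (x :: ones) c w -> Q w) \/ (forall w, g (y :: ones) c w -> Q w).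
Proof.
move=> HQ CP hk h.
have hs : size (x :: y :: nseq k.-1 oR) = k.+1 by rewrite /= size_nseq; lia.
have [i [hi hsub]] := CP _ _ hs h.
case: i hi hsub => [|[|i]] hi hsub; [by left | by right | left].
have hc : Q c.
  apply: hsub; rewrite /= nth_nseq if_same.
  exact: ((mone c c).2 erefl).
move=> w hw; apply: (sub_g HQ _ hc hw); by rewrite /= size_nseq.
Qed.

Lemma two Q N A B : subhypermodule p.+2 k.+2 f g Q -> subhypermodule p.+2 k.+2 f g N ->
  CPp Q -> 0 < k ->
  (forall x y b w, A x -> B y -> N b -> g (x :: y :: nseq k.-1 oR) b w -> Q w) ->
  Good Q N A \/ Good Q N B.
Proof.
move=> HQ HN CP hk h.
apply: NNPP => hn; have [hA hB] := not_or_and _ _ hn.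
have [r [a [w1 [hr [ha [hw1 hq1]]]]]] := notGood hA.
have [s [b [w2 [hs [hb [hw2 hq2]]]]]] := notGood hB.
have st1 : forall w, g (s :: ones) a w -> Q w.
  case: (cpcase HQ CP hk (fun w => h r s a w hr hs ha)) => // hc.
  by case: hq1; apply: hc.
have st2 : forall w, g (r :: ones) b w -> Q w.
  case: (cpcase HQ CP hk (fun w => h r s b w hr hs hb)) => // hc.
  by case: hq2; apply: hc.
have hsz : size (a :: b :: nseq p zM) = p.+2 by rewrite /= size_nseq.
have [c hc] := chg_nonempty HGM hsz.
have hNc := sub_f2 HN ha hb hc.
case: (cpcase HQ CP hk (fun w => h r s c w hr hs hNc)) => hc'.
  by apply: hq1; apply: (sublem HQ hc hc' st2 hw1).
apply: hq2.
have hc2 : f (b :: a :: nseq p zM) c by apply: (fperm HGM _ hsz hc); exact: perm_swap.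
exact: (sublem HQ hc2 hc' st1 hw2).
Qed.

Lemma core Q N : subhypermodule p.+2 k.+2 f g Q -> subhypermodule p.+2 k.+2 f g N -> CPp Q ->
  forall j, j <= k -> forall Ss, size Ss = j.+1 ->
  (forall ts b w, all_in (Ss ++ nseq (k - j) (sing oR)) ts -> N b -> g ts b w -> Q w) ->
  exists i, i < j.+1 /\ Good Q N (nth (fun _ => True) Ss i).
Proof.
move=> HQ HN CP j; elim: j => [|j IH] hj Ss hS h.
  exists 0; split => //.
  case: Ss hS h => [|S [|? ?]] //= _ h.
  move=> t b w ht hb hw; apply: (h (t :: ones) b w) => //.
  rewrite subn0; split => //; exact: all_in_nseq_sing.
have hk : 0 < k by lia.
set d := fun _ : R => True.
set A := nth d Ss j; set B := nth d Ss j.+1; set Ss' := take j Ss.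
have hle : j <= size Ss by rewrite hS; lia.
have hSs' : size Ss' = j by rewrite /Ss' (size_takel hle).
have ES : Ss = Ss' ++ [:: A; B].
  rewrite -{1}(cat_take_drop j Ss) (drop_nth d) ?hS // (drop_nth d) ?hS //.
  by rewrite drop_oversize ?hS.
set J := fun t => exists x y, A x /\ B y /\ t = g' (x :: y :: ones).
have hS' : size (Ss' ++ [:: J]) = j.+1 by rewrite size_cat hSs' addn1.
rewrite ES in h.
have := IH (ltnW hj) (Ss' ++ [:: J]) hS'.
case.
  move=> ts b w hts hb hw.
  have [ts1 [rest [Ets [h1 h2]]]] := all_in_catE hts.
  have [us [x2 [Eus [hus hx2]]]] := all_in_catE h1.
  case: x2 hx2 Eus => [|t [|? ?]] //=; last by move=> [_ []].
  move=> [[x [y [hx [hy ->]]]] _] Eus.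
  have Erest := all_in_nseq_c h2 (fun z (hz : sing oR z) => hz).
  have Ekj : k - j = (k - j.+1).+1 by lia.
  rewrite Ets Eus Erest Ekj /= -catA /= in hw.
  have husz : size us = j by rewrite (all_in_size hus) hSs'.
  have hsz : size us + size (nseq (k - j.+1) oR) = k.-1 by rewrite size_nseq husz; lia.
  have hw' := (collapse x y b w hk hsz).2 hw.
  apply: (h _ b w _ hb hw').
  rewrite -[us ++ _]/(us ++ [:: x; y] ++ nseq (k - j.+1) oR) catA.
  apply: all_in_cat; last exact: all_in_nseq_sing.
  by apply: all_in_cat => //; split => //; split.
move=> i [hi hG].
have hnth : forall i (X : R -> Prop) , i < j -> nth d (Ss' ++ [:: X]) i = nth d Ss' i.
  by move=> i' X hi'; rewrite nth_cat hSs' hi'.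
case: (ltngtP i j) => [hij | hij | eij].
- exists i; split; first lia.
  rewrite ES nth_cat hSs' hij; rewrite (hnth _ _ hij) in hG; exact: hG.
- by move: hi hij; lia.
subst i.
have hGJ : Good Q N J by move: hG; rewrite nth_cat hSs' ltnn subnn.
have Ek : oR :: nseq k.-1 oR = ones by rewrite -[in RHS](prednK hk).
have htwo : forall x y b w, A x -> B y -> N b -> g (x :: y :: nseq k.-1 oR) b w -> Q w.
  move=> x y b w hx hy hb hw.
  have hsz : size ([::] : seq R) + size (nseq k.-1 oR) = k.-1 by rewrite size_nseq.
  have hw' := (collapse x y b w hk hsz).1 hw.
  rewrite /= Ek in hw'.
  by apply: (hGJ _ b w _ hb hw'); exists x, y.
case: (two HQ HN CP hk htwo) => hg; [exists j | exists j.+1]; split => //.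
Qed.

Lemma forward Q : subhypermodule p.+2 k.+2 f g Q -> CPp Q ->
  forall (Is : seq (R -> Prop)) (N1 N2 : M -> Prop), size Is = k.+1 ->
  (forall i, i < k.+1 -> hyperideal p.+2 k.+2 f' g' (nth (fun _ => True) Is i)) ->
  subhypermodule p.+2 k.+2 f g N1 -> subhypermodule p.+2 k.+2 f g N2 ->
  (forall i, i < k.+1 -> exists z, hlift f (N1 :: glift g (nth (fun _ => True) Is i :: nseq k (sing oR)) N2
                              :: nseq p (sing zM)) z /\ ~ Q z) ->
  exists z, hlift f (N1 :: glift g Is N2 :: nseq p (sing zM)) z /\ ~ Q z.
Proof.
move=> HQ CP Is N1 N2 hIs hI HN1 HN2 hcond.
apply: NNPP => hno.
have hall : forall z, hlift f (N1 :: glift g Is N2 :: nseq p (sing zM)) z -> Q z.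
  by move=> z hz; apply: NNPP => hq; apply: hno; exists z.
have hz0 : forall i, i < size Is -> nth (fun _ => True) Is i zR.
  move=> i; rewrite hIs => /hI [[[x hx] _] hcl].
  have := hcl [:: zR] ones x; rewrite subSS subn0 /= size_nseq => /(_ erefl hx).
  by rewrite (gzero (pre := [::])) //= size_nseq.
have gl0 : glift g Is N2 zM.
  exists (nseq (size Is) zR), zM; split; first exact: (all_in_nth_c hz0).
  split; first exact: sub_zero.
  have hs0 : size (nseq (size Is) zR) = k.+1 by rewrite size_nseq.
  exact: ((mzero _ hs0).2 erefl).
have hN1 : forall x, N1 x -> Q x.
  move=> x hx; apply: hall; exists (x :: zM :: nseq p zM); split; last exact: (zero_r HGM).
  by split => //; split => //; exact: all_in_nseq_sing.
have hch : forall ts b w, all_in (Is ++ nseq (k - k) (sing oR)) ts -> N2 b -> g ts b w -> Q w.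
  move=> ts b w; rewrite subnn cats0 => hts hb hw.
  apply: hall; exists (zM :: w :: nseq p zM); split; last exact: (zero_l HGM).
  split; first exact: sub_zero.
  split; first by exists ts, b.
  exact: all_in_nseq_sing.
have [i [hi hG]] := core HQ HN2 CP (leqnn k) hIs hch.
have [z [[xs [hxs hf]] hnq]] := hcond i hi.
apply: hnq.
case: xs hxs hf => [|x1 [|x2 xs']] //=; try by move=> [_ []].
move=> [hx1 [[rs' [b [hrs' [hb hg]]]] hxs']] hf.
rewrite (all_in_nseq_c hxs' (fun z (hz : sing zM z) => hz)) in hf.
apply: (sub_f2 HQ (hN1 _ hx1) _ hf).
case: rs' hrs' hg => [|t rs''] //= [ht hr''].
rewrite (all_in_nseq_c hr'' (fun z (hz : sing oR z) => hz)) => hg.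
exact: (hG t b x2 ht hb hg).
Qed.

Lemma backward Q : subhypermodule p.+2 k.+2 f g Q ->
  (forall (Is : seq (R -> Prop)) (N1 N2 : M -> Prop), size Is = k.+1 ->
  (forall i, i < k.+1 -> hyperideal p.+2 k.+2 f' g' (nth (fun _ => True) Is i)) ->
  subhypermodule p.+2 k.+2 f g N1 -> subhypermodule p.+2 k.+2 f g N2 ->
  (forall i, i < k.+1 -> exists z, hlift f (N1 :: glift g (nth (fun _ => True) Is i :: nseq k (sing oR)) N2
                              :: nseq p (sing zM)) z /\ ~ Q z) ->
  exists z, hlift f (N1 :: glift g Is N2 :: nseq p (sing zM)) z /\ ~ Q z) ->
  CPp Q.
Proof.
move=> HQ H rs a hrs hsub.
apply: NNPP => hno.
have hw : forall i, i < k.+1 -> exists w, g (nth oR rs i :: ones) a w /\ ~ Q w.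
  move=> i hi; apply: NNPP => hn'; apply: hno; exists i; split => // w hw.
  by apply: NNPP => hq; apply: hn'; exists w.
set Is := map PI rs.
have hIsz : size Is = k.+1 by rewrite size_map.
have hIh : forall i, i < k.+1 -> hyperideal p.+2 k.+2 f' g' (nth (fun _ => True) Is i).
  by move=> i hi; rewrite (nth_map oR) ?hrs //; exact: PI_hyp.
have hlast : forall t pre post, nth (fun _ => True) Is k t -> size (pre ++ post) = k.+1 ->
     nth (fun _ => True) Is k (g' (pre ++ t :: post)).
  by move=> t pre post; rewrite (nth_map oR) ?hrs // => ht hs; exact: PI_mul.
have HN2 := NQ_sub HQ hIsz hlast.
have ha := a_in_NQ HQ hrs hsub.
have hc : forall i, i < k.+1 -> exists z, hlift f (Q :: glift g (nth (fun _ => True) Is i :: nseq k (sing oR)) (NQ Q Is)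
                              :: nseq p (sing zM)) z /\ ~ Q z.
  move=> i hi; have [w [hw1 hw2]] := hw i hi.
  exists w; split => //.
  exists (zM :: w :: nseq p zM); split; last exact: (zero_l HGM).
  split; first exact: sub_zero.
  split; last exact: all_in_nseq_sing.
  exists (nth oR rs i :: ones), a; split; last by split.
  split; last exact: all_in_nseq_sing.
  rewrite (nth_map oR) ?hrs //; exact: PI_self.
have [z [[xs [hxs hf]] hnq]] := H Is Q (NQ Q Is) hIsz hIh HQ HN2 hc.
apply: hnq.
case: xs hxs hf => [|x1 [|x2 xs']] //=; try by move=> [_ []].
move=> [hx1 [[ts [b [hts [hb hg]]]] hxs']] hf.
rewrite (all_in_nseq_c hxs' (fun z (hz : sing zM z) => hz)) in hf.
exact: (sub_f2 HQ hx1 (hb ts x2 hts hg) hf).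
Qed.

End HM.

Theorem mainTheorem1 (m n : nat) (hm : 2 <= m) (hn : 2 <= n)
  (R : Type) (f' : hop R) (g' : seq R -> R) (zR oR : R)
  (M : Type) (f : hop M) (g : seq R -> M -> M -> Prop) (zM : M)
  (HR : krasner_hyperring m n f' g' zR oR)
  (HM : hypermodule m n f' g' zR oR f g zM)
  (Q : M -> Prop) (HQ : subhypermodule m n f g Q) (HQp : hproper Q) :
  let S := fun x => ~ Q x in
  classical_prime m n f g oR Q <->
  (forall (Is : seq (R -> Prop)) (N1 N2 : M -> Prop),
     size Is = (n - 1)%N ->
     (forall i, i < n - 1 -> hyperideal m n f' g' (nth (fun _ => True) Is i)) ->
     subhypermodule m n f g N1 -> subhypermodule m n f g N2 ->
     (forall i, i < n - 1 ->
        exists z, hlift f (N1 :: glift g (nth (fun _ => True) Is i :: nseq (n - 2) (sing oR)) N2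
                              :: nseq (m - 2) (sing zM)) z /\ S z) ->
     exists z, hlift f (N1 :: glift g Is N2 :: nseq (m - 2) (sing zM)) z /\ S z).
Proof.
move: hm hn HR HM HQ HQp.
case: m => [|[|p]] // _; case: n => [|[|k]] // _ HR HM HQ HQp S.
rewrite /S /classical_prime !subSS !subn0 /=.
split.
  move=> [_ [_ CP]]; exact: (forward HR HM HQ CP).
move=> H; split => //; split => //; exact: (backward HR HM HQ H).
Qed.
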